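(* Let $k>0$ be real, let $M=\begin{bmatrix} k-1 & k-1 & k\\ 1&0&0\\ 0&1&0\end{bmatrix}$ and $N_0=\begin{bmatrix} k-1 & 2k & 2k\\ 2 & 1-k & 2\\ \frac{2}{k} & \frac{2}{k} & -\frac{1}{k}(k^2+k-2)\end{bmatrix}$. For integers $n\ge1$ put $\mathbf{J}_n=M^n$ and $\mathbf{j}_n=N_0M^n$. Then for every integer $n\ge1$: $$\left(\mathbf{j}_{n+1}\right)^2=\left(\mathbf{j}_1\right)^2\mathbf{J}_{2n},\qquad \mathbf{j}_{2n+1}=\mathbf{J}_n\,\mathbf{j}_{n+1}.$$ *)

(* Defs.v *)
From mathcomp Require Import all_boot all_order all_algebra.
From mathcomp Require Import reals.
Set Implicit Arguments. Unset Strict Implicit. Unset Printing Implicit Defensive.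
Import Order.TTheory GRing.Theory Num.Theory.
Local Open Scope ring_scope.

Definition Mmat (R : realType) (k : R) : 'M[R]_3 :=
  \matrix_(i < 3, j < 3)
    nth 0 (nth [::] [:: [:: k - 1; k - 1; k];
        [:: 1; 0; 0];
        [:: 0; 1; 0]] i) j.

Definition N0mat (R : realType) (k : R) : 'M[R]_3 :=
  \matrix_(i < 3, j < 3)
    nth 0 (nth [::] [:: [:: k - 1; 2 * k; 2 * k];
        [:: 2; 1 - k; 2];
        [:: 2 / k; 2 / k; - ((k ^+ 2 + k - 2) / k)]] i) j.

Definition Jn (R : realType) (k : R) (n : nat) : 'M[R]_3 := (Mmat k) ^+ n.
Definition jn (R : realType) (k : R) (n : nat) : 'M[R]_3 := N0mat k *m (Mmat k) ^+ n.

(* Main.v *)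
Require Import Defs.
From mathcomp Require Import all_boot all_order all_algebra.
From mathcomp Require Import reals.
From mathcomp Require Import ring.
Import Order.TTheory GRing.Theory Num.Theory.
Local Open Scope ring_scope.

Lemma commMN (R : realType) (k : R) (hk : 0 < k) :
  Mmat k *m N0mat k = N0mat k *m Mmat k.
Proof.
have k0 : k != 0 by rewrite gt_eqF.
apply/matrixP => i j; rewrite !mxE !big_ord_recl big_ord0 !mxE /=.
case: i => [[|[|[|i]]] Hi] //; case: j => [[|[|[|j]]] Hj] //=;
  rewrite ?big_ord0 /bump /=; field; exact: k0.
Qed.

Theorem mainTheorem6 (R : realType) (k : R) (hk : 0 < k) (n : nat) (hn : (1 <= n)%N) :
  (jn k n.+1) *m (jn k n.+1) = ((jn k 1) *m (jn k 1)) *m Jn k (2 * n)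
  /\ jn k (2 * n).+1 = Jn k n *m jn k n.+1.
Proof.
have C : GRing.comm (Mmat k : 'M[R]_(2.+1)) (N0mat k).
  by rewrite /GRing.comm -!mulmxE commMN.
have X : forall m, Mmat k ^+ m * N0mat k = N0mat k * Mmat k ^+ m.
  move=> m; apply: commr_sym; apply: commrX; exact: commr_sym.
rewrite /jn /Jn !mulmxE; split.
- rewrite -mulrA (mulrA (_ ^+ n.+1)) X.
  have -> : N0mat k * Mmat k ^+ 1 * (N0mat k * Mmat k ^+ 1) = N0mat k * N0mat k * Mmat k ^+ 2.
    by rewrite -mulrA (mulrA (Mmat k ^+ 1)) X !mulrA -mulrA -exprD.
  rewrite !mulrA -!mulrA -!exprD; congr (_ * (_ * _)).
  by rewrite -!exprS mul2n -addnn !addSn !addnS.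
- by rewrite [RHS]mulrA X -mulrA -exprD addnS mul2n -addnn.
Qed.
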